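(* Let $\kappa\ge0$, $\beta>0$ and $U\in\mathbb{R}$. For $n\ge0$ sufficiently small (so that $t(n):=1+Un>0$), put $G(n):=t(n)^2+\kappa^2$ and let $\lambda^2(n)$ denote the unique positive solution $x$ of $$G(n)\Big[n\,t(n)^2+\frac{\beta^2}{16x}G(n)\Big]=x\,t(n)^2 .$$ Define $\delta(n):=4\lambda^2(n)-\beta(1+\kappa^2)$. Then, as $n\to0^+$, $$\delta(n)=A\,n+B\,n^2+C\,n^3+O(n^4),$$ where \begin{align*} A&=2(1+\kappa^2)-\beta U(\kappa^2-1),\\ B&=\beta\kappa^2U^2+4U+\frac{2(1+\kappa^2)}{\beta},\\ C&=\frac U\beta\Big(-\beta^2\kappa^2U^2+2\beta U+2\kappa^2+6\Big). \end{align*}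
   Context: The defining equation for $\lambda^2(n)$ is the superradiant steady-state equation $f(s)=0$ of the mean-field dissipative quantum Rabi model with Kerr nonlinearity, with $s=Un$ and $n=|\alpha|^2$ the photon-number order parameter, in normalized units ($\kappa,\lambda$ stand for $\kappa/\omega_c,\lambda/\omega_c$, $\beta=\omega_a/\omega_c$, $U=2KN/\omega_c$); multiplied by $x$ it is a quadratic in $x$ with exactly one positive root. $\delta$ measures the distance of the coupling from the normal-phase threshold $4\lambda_c^2=\beta(1+\kappa^2)$. *)

(* Defs.v *)
From Stdlib Require Import Reals ClassicalEpsilon.
Open Scope R_scope.

Definition tfun (U n : R) : R := 1 + U * n.

Definition Gfun (kappa U n : R) : R := (tfun U n) ^ 2 + kappa ^ 2.

Definition lam2_eq (kappa beta U n x : R) : Prop :=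
  Gfun kappa U n * (n * (tfun U n) ^ 2 + beta ^ 2 / (16 * x) * Gfun kappa U n)
  = x * (tfun U n) ^ 2.

(* lambda^2(n): "the" positive solution x of the equation, chosen by
   Hilbert's epsilon (it is the unique one whenever t(n) > 0). *)
Definition lambda2 (kappa beta U n : R) : R :=
  epsilon (inhabits 0) (fun x => 0 < x /\ lam2_eq kappa beta U n x).

Definition delta (kappa beta U n : R) : R :=
  4 * lambda2 kappa beta U n - beta * (1 + kappa ^ 2).

Definition coefA (kappa beta U : R) : R :=
  2 * (1 + kappa ^ 2) - beta * U * (kappa ^ 2 - 1).
Definition coefB (kappa beta U : R) : R :=
  beta * kappa ^ 2 * U ^ 2 + 4 * U + 2 * (1 + kappa ^ 2) / beta.
Definition coefC (kappa beta U : R) : R :=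
  U / beta * (- beta ^ 2 * kappa ^ 2 * U ^ 2 + 2 * beta * U + 2 * kappa ^ 2 + 6).

(* Main.v *)
Require Import Defs.
From Stdlib Require Import Reals Lra Psatz ClassicalEpsilon.
Open Scope R_scope.

Lemma uniq_root (G t n b x x0 : R) : 0 < t -> 0 < n -> 0 < G -> 0 < x0 -> 0 < x ->
  t^2*x0^2 - G*n*t^2*x0 - b^2*G^2/16 = 0 ->
  G * (n * t ^ 2 + b ^ 2 / (16 * x) * G) = x * t ^ 2 -> x = x0.
Proof.
  intros ht hn hG hx0 hx Hq He.
  assert (Hq2 : t^2*x^2 - G*n*t^2*x - b^2*G^2/16 = 0).
  { assert (E: b ^ 2 / (16 * x) * G = (b^2*G/16) * / x) by (field; lra).
    rewrite E in He.
    assert (E2: x * (G * (n * t ^ 2 + b ^ 2 * G / 16 * / x)) = x*(x*t^2)) by (rewrite He; ring).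
    replace (x * (G * (n * t ^ 2 + b ^ 2 * G / 16 * / x))) with (x*G*n*t^2 + b^2*G^2/16) in E2
      by (field; lra). nra. }
  assert (Hgt : x >= G*n).
  { assert (0 <= b ^ 2 / (16 * x) * G).
    { apply Rmult_le_pos; [|lra]. unfold Rdiv. apply Rmult_le_pos. nra.
      left; apply Rinv_0_lt_compat; lra. }
    assert (G*n*t^2 <= x*t^2) by nra.
    assert (0 < t^2) by (apply pow_lt; lra).
    apply Rmult_le_reg_r in H0; lra. }
  assert ((x - x0) * ((x + x0 - G*n)*t^2) = 0) by nra.
  assert (0 < (x + x0 - G*n)*t^2) by (apply Rmult_lt_0_compat; [lra| apply pow_lt; lra]).
  apply Rmult_integral in H. destruct H; nra.
Qed.

Theorem mainTheorem5 (kappa beta U : R) (hkappa : 0 <= kappa) (hbeta : 0 < beta) :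
  exists eps M : R, 0 < eps /\
    (forall n : R, 0 < n < eps ->
       0 < tfun U n /\
       (forall x : R, 0 < x /\ lam2_eq kappa beta U n x <-> x = lambda2 kappa beta U n) /\
       Rabs (delta kappa beta U n
             - (coefA kappa beta U * n + coefB kappa beta U * n ^ 2
                + coefC kappa beta U * n ^ 3)) <= M * n ^ 4).
Proof.
  set (Qb := (6*U^2 + kappa^2*beta^2*U^4 + 8*Rabs U^3 + 2*U^4)/beta).
  exists (Rmin 1 (1/(2*(Rabs U+1)))), (2*(Qb + (9/4+kappa^2)*(2*(3/2)^4/beta^3))).
  split.
  { apply Rmin_pos; [lra|]. apply Rdiv_lt_0_compat; [lra|]. pose proof (Rabs_pos U); lra. }
  intros n [hn hne].
  assert (hn1 : n < 1) by (eapply Rlt_le_trans; [exact hne| apply Rmin_l]).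
  assert (hn2 : n < 1/(2*(Rabs U+1))) by (eapply Rlt_le_trans; [exact hne| apply Rmin_r]).
  pose proof (Rabs_pos U) as hU0.
  assert (hUn : Rabs U * n <= 1/2).
  { assert (n * (2*(Rabs U+1)) < 1).
    { apply (Rmult_lt_compat_r (2*(Rabs U+1))) in hn2; [|lra].
      replace (1 / (2 * (Rabs U + 1)) * (2 * (Rabs U + 1))) with 1 in hn2 by (field; lra). lra. }
    nra. }
  assert (hUn2 : Rabs (U*n) <= 1/2) by (rewrite Rabs_mult, (Rabs_right n); lra).
  set (t := tfun U n).
  assert (ht : 1/2 <= t <= 3/2).
  { unfold t, tfun. pose proof (Rle_abs (U*n)). pose proof (Rle_abs (-(U*n))).
    rewrite Rabs_Ropp in H0. lra. }
  split; [lra|].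
  set (G := Gfun kappa U n).
  assert (hGd : G = t^2 + kappa^2) by reflexivity.
  assert (hG : 0 < G) by nra.
  set (S := sqrt (beta^2 + 4*n^2*t^2)).
  assert (hS2 : S^2 = beta^2 + 4*n^2*t^2).
  { unfold S. rewrite <- Rsqr_pow2. apply Rsqr_sqrt. nra. }
  assert (hSb : beta <= S).
  { assert (0 <= S) by apply sqrt_pos. nra. }
  set (x0 := G*(2*n*t+S)/(4*t)).
  assert (hx0 : 0 < x0).
  { unfold x0. apply Rdiv_lt_0_compat; [|lra]. apply Rmult_lt_0_compat; nra. }
  assert (hq : t^2*x0^2 - G*n*t^2*x0 - beta^2*G^2/16 = 0).
  { unfold x0. replace (t ^ 2 * (G * (2 * n * t + S) / (4 * t)) ^ 2 -
     G * n * t ^ 2 * (G * (2 * n * t + S) / (4 * t)) - beta ^ 2 * G ^ 2 / 16)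
     with (G^2*(S^2 - 4*n^2*t^2 - beta^2)/16) by (field; lra).
    rewrite hS2. field. }
  assert (hsol : lam2_eq kappa beta U n x0).
  { unfold lam2_eq. fold t G.
    assert (E: beta ^ 2 / (16 * x0) * G = (beta^2*G/16) * / x0) by (field; lra).
    rewrite E.
    apply (Rmult_eq_reg_l x0); [|lra].
    replace (x0 * (G * (n * t ^ 2 + beta ^ 2 * G / 16 * / x0))) with (x0*G*n*t^2 + beta^2*G^2/16)
      by (field; lra). nra. }
  assert (huniq : forall x, 0 < x /\ lam2_eq kappa beta U n x -> x = x0).
  { intros x [hx he]. unfold lam2_eq in he. fold t G in he.
    apply (uniq_root G t n beta x x0); auto; lra. }
  assert (hl : lambda2 kappa beta U n = x0).
  { apply huniq. unfold lambda2.
    apply (epsilon_spec (inhabits 0) (fun x => 0 < x /\ lam2_eq kappa beta U n x)).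
    exists x0; auto. }
  split.
  { intro x; split; [intro h; rewrite hl; auto | intro h; rewrite h, hl; auto]. }
  unfold delta. rewrite hl.
  set (Q := (6*U^2 + kappa^2*beta^2*U^4 + 8*U^3*n + 2*U^4*n^2)/beta).
  set (r := S - beta - 2*n^2*t^2/beta).
  assert (ht0 : 1 + U*n <> 0) by (unfold t, tfun in ht; lra).
  assert (Hid : 4 * x0 - beta * (1 + kappa ^ 2) -
     (coefA kappa beta U * n + coefB kappa beta U * n ^ 2 + coefC kappa beta U * n ^ 3)
     = (n^4*Q + G*r)/t).
  { unfold x0, Q, r, G, Gfun, t, tfun, coefA, coefB, coefC. field. lra. }
  rewrite Hid.
  assert (hnt : n^2*t^2 = (S^2-beta^2)/4) by lra.
  assert (hr : r = -(S-beta)^2/(2*beta)).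
  { unfold r. replace (2*n^2*t^2) with (2*(n^2*t^2)) by ring. rewrite hnt. field. lra. }
  assert (hSb2 : (S-beta)*(2*beta) <= 4*n^2*t^2) by nra.
  assert (hSb3 : S - beta <= 4*n^2*t^2/(2*beta)).
  { apply (Rmult_le_reg_r (2*beta)); [lra|]. unfold Rdiv. rewrite Rmult_assoc, Rinv_l; lra. }
  assert (hr1 : 0 <= -r).
  { rewrite hr. unfold Rdiv. rewrite <- Ropp_mult_distr_l, Ropp_involutive.
    apply Rmult_le_pos; [nra|]. left; apply Rinv_0_lt_compat; lra. }
  assert (hr2 : -r <= 2*n^4*(3/2)^4/beta^3).
  { rewrite hr.
    assert (h1 : (S-beta)^2 <= (4*n^2*t^2/(2*beta))^2) by (apply pow_incr; lra).
    assert (ht4 : t^4 <= (3/2)^4) by (apply pow_incr; lra).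
    assert (h2 : (4*n^2*t^2/(2*beta))^2 = 4*(n^4*t^4)/beta^2) by (field; lra).
    assert (h3 : -(-(S-beta)^2/(2*beta)) = (S-beta)^2/(2*beta)) by (field; lra).
    rewrite h3.
    apply (Rmult_le_reg_r (2*beta)); [lra|].
    replace ((S - beta) ^ 2 / (2 * beta) * (2 * beta)) with ((S-beta)^2) by (field; lra).
    replace (2 * n ^ 4 * (3 / 2) ^ 4 / beta ^ 3 * (2 * beta)) with (4*(n^4*(3/2)^4)/beta^2) by (field; lra).
    rewrite h2 in h1. eapply Rle_trans; [exact h1|].
    unfold Rdiv. apply Rmult_le_compat_r; [left; apply Rinv_0_lt_compat; nra|].
    assert (0 < n^4) by (apply pow_lt; lra). nra. }
  assert (hQ : Rabs Q <= Qb).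
  { unfold Q, Qb. unfold Rdiv. rewrite Rabs_mult, (Rabs_right (/beta)).
    2: left; apply Rinv_0_lt_compat; lra.
    apply Rmult_le_compat_r; [left; apply Rinv_0_lt_compat; lra|].
    apply Rabs_le.
    assert (hu3 : Rabs (U^3) = Rabs U ^3) by (symmetry; apply RPow_abs).
    pose proof (Rle_abs (U^3)). pose proof (Rle_abs (-(U^3))). rewrite Rabs_Ropp in H0.
    assert (0 <= U^4) by (replace (U^4) with ((U^2)^2) by ring; apply pow2_ge_0).
    assert (0 <= U^2) by apply pow2_ge_0.
    assert (0 <= kappa^2*beta^2*U^4) by (apply Rmult_le_pos; [|lra]; apply Rmult_le_pos; apply pow2_ge_0).
    assert (0 <= Rabs U ^3) by (apply pow_le; lra).
    assert (0 <= n^2 <= 1) by (split; [apply pow2_ge_0| nra]).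
    split; nra. }
  assert (hG2 : G <= 9/4 + kappa^2).
  { rewrite hGd. assert (t^2 <= (3/2)^2) by (apply pow_incr; lra). lra. }
  assert (hn4 : 0 < n^4) by (apply pow_lt; lra).
  unfold Rdiv. rewrite Rabs_mult, (Rabs_right (/t)) by (left; apply Rinv_0_lt_compat; lra).
  assert (hti : /t <= 2).
  { replace 2 with (/(1/2)) by field. apply Rinv_le_contravar; lra. }
  assert (hA : Rabs (n^4*Q + G*r) <= n^4 * Qb + G * (2*n^4*(3/2)^4/beta^3)).
  { eapply Rle_trans; [apply Rabs_triang|].
    rewrite !Rabs_mult, (Rabs_right (n^4)) by lra. rewrite (Rabs_right G) by lra.
    replace (Rabs r) with (-r) by (rewrite Rabs_left1; lra).
    apply Rplus_le_compat; [apply Rmult_le_compat_l; lra | apply Rmult_le_compat_l; lra]. }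
  assert (hB : 0 <= 2*n^4*(3/2)^4/beta^3).
  { unfold Rdiv. apply Rmult_le_pos; [lra|]. left; apply Rinv_0_lt_compat; apply pow_lt; lra. }
  assert (hC : G * (2*n^4*(3/2)^4/beta^3) <= (9/4+kappa^2) * (2*n^4*(3/2)^4/beta^3))
    by (apply Rmult_le_compat_r; lra).
  assert (hE : (9/4+kappa^2) * (2*n^4*(3/2)^4/beta^3) = n^4 * ((9/4+kappa^2)*(2*(3/2)^4/beta^3)))
    by (field; lra).
  assert (0 <= Rabs (n ^ 4 * Q + G * r)) by apply Rabs_pos.
  assert (0 <= Qb) by (eapply Rle_trans; [apply Rabs_pos| exact hQ]).
  assert (0 < /t) by (apply Rinv_0_lt_compat; lra).
  nra.
Qed.
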